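(* Consider a transformer with $L$ layers and $H$ attention heads per layer, each head of dimension $d_h$. For a prompt $\rho$ of length $|\rho|$, let the query position be the last position, and for layer $\ell$ and head $h$ let $$\alpha_{ti}^{(\ell,h)}=\frac{\exp\left(q_t^{(\ell,h)\top}k_i^{(\ell,h)}/\sqrt{d_h}\right)}{\sum_{j=1}^{|\rho|}\exp\left(q_t^{(\ell,h)\top}k_j^{(\ell,h)}/\sqrt{d_h}\right)}$$ be the attention weights. Assume that for every prompt, every layer $\ell$, head $h$ and position $j$, $\|q_t^{(\ell,h)}\|\le Q_{\ell,h}$ and $\|k_j^{(\ell,h)}\|\le K_{\ell,h}$. Let $\mathsf{R}$ be a task-relevant set of $m$ token positions and define the averaged attention mass $$A(\rho)=\frac{1}{LH}\sum_{\ell=1}^{L}\sum_{h=1}^{H}\sum_{i\in\mathsf{R}}\alpha_{ti}^{(\ell,h)}.$$ Suppose feasibility of a prompt requires $A(\rho)\ge\tau$ for a given $\tau>0$, and let $|\rho|_{\mathrm{sat}}$ denote the supremum of lengths $|\rho|$ of prompts satisfying this requirement. Let $|\rho|_{\mathrm{feasible}}>0$ be the hardware-feasible prompt length. Then $$\Delta_{\rho}:=\frac{|\rho|_{\mathrm{sat}}}{|\rho|_{\mathrm{feasible}}}\le\frac{m}{\tau|\rho|_{\mathrm{feasible}}}\exp\left(\max_{\ell,h}\frac{2Q_{\ell,h}K_{\ell,h}}{\sqrt{d_h}}\right).$$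
   Context: $|\rho|_{\mathrm{feasible}}$ is an arbitrary positive number (in the paper, the maximal prompt length allowed by KV-cache memory); $|\rho|_{\mathrm{sat}}$ is the saturation length, i.e. the largest prompt length for which the attention-mass requirement $A(\rho)\ge\tau$ can hold. *)

(* Defs.v *)
From HB Require Import structures.
From mathcomp Require Import all_boot all_order all_algebra.
From mathcomp Require Import all_classical all_reals all_analysis.
Set Implicit Arguments. Unset Strict Implicit. Unset Printing Implicit Defensive.
Import Order.TTheory GRing.Theory Num.Theory.
Local Open Scope ring_scope.

Definition dotv {R : realType} {d : nat} (u v : 'rV[R]_d) : R :=
  \sum_(i < d) u 0 i * v 0 i.
Definition normv {R : realType} {d : nat} (u : 'rV[R]_d) : R :=
  Num.sqrt (dotv u u).

Definition attn {R : realType} {d n : nat} (q : 'rV[R]_d) (k : 'I_n -> 'rV[R]_d)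
    (i : 'I_n) : R :=
  expR (dotv q (k i) / Num.sqrt d%:R) /
  \sum_(j < n) expR (dotv q (k j) / Num.sqrt d%:R).

Definition attn_mass {R : realType} {L H d n : nat}
    (q : 'I_L -> 'I_H -> 'rV[R]_d) (k : 'I_L -> 'I_H -> 'I_n -> 'rV[R]_d)
    (Rel : {set 'I_n}) : R :=
  (L * H)%:R^-1 *
  \sum_(l < L) \sum_(h < H) \sum_(i in Rel) attn (q l h) (k l h) i.

(* Main.v *)
Require Import Defs.
From HB Require Import structures.
From mathcomp Require Import all_boot all_order all_algebra.
From mathcomp Require Import all_classical all_reals all_analysis.
From mathcomp Require Import ring lra.
Import Order.TTheory GRing.Theory Num.Theory.
Local Open Scope ring_scope.
Local Open Scope classical_set_scope.

Lemma dsum_add (R : realType) d (F G : 'I_d -> 'I_d -> R) :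
  \sum_i \sum_j F i j + \sum_i \sum_j G i j = \sum_i \sum_j (F i j + G i j).
Proof. rewrite -big_split; apply eq_bigr => i _; by rewrite -big_split. Qed.

Lemma dsum_scale (R : realType) d (c : R) (F : 'I_d -> 'I_d -> R) :
  c * \sum_i \sum_j F i j = \sum_i \sum_j (c * F i j).
Proof. rewrite mulr_sumr; apply eq_bigr => i _; by rewrite mulr_sumr. Qed.

Lemma prod_dsum (R : realType) d (f g : 'I_d -> R) :
  (\sum_i f i) * (\sum_j g j) = \sum_i \sum_j (f i * g j).
Proof. rewrite mulr_suml; apply eq_bigr => i _; by rewrite mulr_sumr. Qed.

Lemma cs2 (R : realType) d (u v : 'rV[R]_d) :
  (dotv u v) ^+ 2 <= dotv u u * dotv v v.
Proof.
have H : 0 <= \sum_i \sum_j (u 0 i * v 0 j - u 0 j * v 0 i) ^+ 2.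
  by apply: sumr_ge0 => i _; apply: sumr_ge0 => j _; apply: sqr_ge0.
have E : \sum_i \sum_j (u 0 i * v 0 j - u 0 j * v 0 i) ^+ 2 =
   dotv u u * dotv v v + dotv v v * dotv u u + (-2) * (dotv u v * dotv u v).
  rewrite /dotv !prod_dsum dsum_scale !dsum_add.
  apply eq_bigr => i _; apply eq_bigr => j _; ring.
rewrite E in H; rewrite expr2; lra.
Qed.

Lemma cs (R : realType) d (u v : 'rV[R]_d) :
  `|dotv u v| <= normv u * normv v.
Proof.
rewrite /normv -sqrtrM; last by apply: sumr_ge0 => i _; rewrite -expr2 sqr_ge0.
by rewrite -sqrtr_sqr ler_sqrt ?cs2 // mulr_ge0 // sumr_ge0 // => i _; rewrite -expr2 sqr_ge0.
Qed.

Lemma normv_ge0 (R : realType) d (u : 'rV[R]_d) : 0 <= normv u.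
Proof. exact: sqrtr_ge0. Qed.

Lemma attn_le (R : realType) d n (q : 'rV[R]_d) (k : 'I_n -> 'rV[R]_d) (c : R) i :
  (forall j, `|dotv q (k j) / Num.sqrt d%:R| <= c) ->
  attn q k i <= expR (2 * c) / n%:R.
Proof.
move=> hc.
have n0 : (0 < n)%N by case: n k i {hc} => [|n] k [].
have S : n%:R * expR (- c) <= \sum_(j < n) expR (dotv q (k j) / Num.sqrt d%:R).
  have -> : n%:R * expR (- c) = \sum_(j < n) expR (- c).
    by rewrite sumr_const card_ord mulr_natl.
  apply: ler_sum => j _; rewrite ler_expR.
  by have := hc j; rewrite ler_norml => /andP[].
have ei : expR (dotv q (k i) / Num.sqrt d%:R) <= expR c.
  by rewrite ler_expR; have := hc i; rewrite ler_norml => /andP[].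
have np : 0 < n%:R * expR (- c) :> R by rewrite mulr_gt0 ?expR_gt0 // ltr0n.
rewrite /attn.
apply: (le_trans (y := expR c / (n%:R * expR (- c)))).
  apply: ler_pM; rewrite ?expR_ge0 ?invr_ge0 ?(ltW (lt_le_trans np S)) //.
  by rewrite lef_pV2 ?posrE // (lt_le_trans np S).
rewrite invfM expRN invrK (_ : 2 * c = c + c); last by ring.
rewrite expRD le_eqVlt; apply/orP; left; apply/eqP; ring.
Qed.

Lemma le_bigmax_ord' {R : realType} {n} (F : 'I_n -> R) (x : R) i :
  F i <= \big[Num.max/x]_(j < n) F j.
Proof. by rewrite (bigD1 i) //= le_max lexx. Qed.

Theorem mainTheorem3 (R : realType) (L H d m : nat) (P : Type) (len : P -> nat)
  (q : forall rho : P, 'I_L -> 'I_H -> 'rV[R]_d)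
  (k : forall rho : P, 'I_L -> 'I_H -> 'I_(len rho) -> 'rV[R]_d)
  (Rel : forall rho : P, {set 'I_(len rho)})
  (Q K : 'I_L -> 'I_H -> R) (tau feas : R) :
  (0 < L)%N -> (0 < H)%N -> (0 < d)%N ->
  (forall rho, (0 < len rho)%N) ->
  (forall rho l h, normv (q rho l h) <= Q l h) ->
  (forall rho l h j, normv (k rho l h j) <= K l h) ->
  (forall rho, #|Rel rho| = m) ->
  0 < tau -> 0 < feas ->
  (ereal_sup [set ((len rho)%:R : R)%:E | rho in
                [set rho | (tau <= attn_mass (q rho) (k rho) (Rel rho))%R]]
     * (feas^-1)%:E <=
   ((m%:R / (tau * feas)) *
    expR (\big[Num.max/0]_(l < L) \big[Num.max/0]_(h < H)
            (2 * Q l h * K l h / Num.sqrt d%:R)))%:E)%E.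
Proof.
move=> L0 H0 d0 len0 hQ hK hm tau0 feas0.
set M := \big[Num.max/0]_(l < L) _.
have sd0 : 0 < Num.sqrt (d%:R : R) by rewrite sqrtr_gt0 ltr0n.
have hM : forall l h, 2 * (Q l h * K l h / Num.sqrt d%:R) <= M.
  move=> l h; rewrite !mulrA.
  apply: le_trans; last by rewrite /M; apply: (le_bigmax_ord' (fun l => \big[Num.max/0]_(h < H) (2 * Q l h * K l h / Num.sqrt d%:R)) 0 l).
  exact: (le_bigmax_ord' (fun h => 2 * Q l h * K l h / Num.sqrt d%:R)).
have key : forall rho, tau <= attn_mass (q rho) (k rho) (Rel rho) ->
    (len rho)%:R <= m%:R / tau * expR M.
  move=> rho ht.
  have n0 : 0 < (len rho)%:R :> R by rewrite ltr0n.
  have B : attn_mass (q rho) (k rho) (Rel rho) <= m%:R * (expR M / (len rho)%:R).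
    rewrite /attn_mass.
    apply: (le_trans (y := (L * H)%:R^-1 *
       \sum_(l < L) \sum_(h < H) (m%:R * (expR M / (len rho)%:R)))).
      rewrite ler_pM2l ?invr_gt0 ?ltr0n ?muln_gt0 ?L0 ?H0 //.
      apply: ler_sum => l _; apply: ler_sum => h _.
      rewrite -(hm rho) mulr_natl -sumr_const.
      apply: ler_sum => i _.
      apply: le_trans (attn_le _ _ _ _ _ (Q l h * K l h / Num.sqrt d%:R) i _) _.
        move=> j; rewrite normrM normfV (ger0_norm (ltW sd0)) ler_pM2r ?invr_gt0 //.
        apply: le_trans (cs _ _ _ _) _.
        by apply: ler_pM; rewrite ?normv_ge0.
      by rewrite ler_pM2r ?invr_gt0 // ler_expR.
    have LH0 : ((L * H)%:R : R) != 0 by rewrite pnatr_eq0 -lt0n muln_gt0 L0 H0.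
    set c := m%:R * _.
    rewrite !sumr_const !card_ord -mulrnA mulnC -(mulr_natl c).
    by rewrite mulKf // mulnC.
  have := le_trans ht B.
  rewrite mulrA ler_pdivlMr // => h1.
  by rewrite mulrAC ler_pdivlMr // mulrC.
apply: (le_trans (y := ((m%:R / tau * expR M)%:E * (feas^-1)%:E)%E)).
  apply: lee_wpmul2r; first by rewrite lee_fin invr_ge0 ltW.
  apply: ge_ereal_sup => _ [rho hr <-]; rewrite lee_fin; exact: key.
rewrite -EFinM lee_fin invfM le_eqVlt; apply/orP; left; apply/eqP.
by rewrite !mulrA mulrAC.
Qed.
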